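(* Assume $d(\eta,\cdot)$ attains its minimum over $\mathcal G$ at $g^*=g^{(\theta^* )}$ for some $\theta^*\in\mathbb{R}^m$, and let $g^{bf}$ be the maximum-entropy element of $P$. Then $$d(\eta,g^{bf})-d(\eta,g^* )\le 2\,\epsilon\cdot|\theta^*|\le 2\|\epsilon\|_\infty\|\theta^*\|_1 .$$ If moreover $g^{bf}\in\mathcal G$, the left-hand side equals $d(g^*,g^{bf})$, so $d(g^*,g^{bf})\le 2\epsilon\cdot|\theta^*|=O(\|\epsilon\|_\infty)$.
   Context: Standard setup. Let $n\ge1$, $k\ge2$, $p\ge1$ be integers and $m=p+k$. There are $n$ data points $x_1,\dots,x_n$ and $p$ rules $h^{(1)},\dots,h^{(p)}$, each a map from $\{x_1,\dots,x_n\}$ to $\{1,\dots,k\}\cup\{?\}$, where ''?'' means abstain. Let $n_j\ge1$ be the number of indices $i$ with $h^{(j)}(x_i)\neq ?$. $\Delta_k$ denotes the probability simplex in $\mathbb{R}^k$; an element $z\in\Delta_k^n\subset\mathbb{R}^{nk}$ is written $z=(z_1,\dots,z_n)$ with $z_i=(z_{i1},\dots,z_{ik})\in\Delta_k$. For $j\le p$ let $h^{(j)}\in\{0,1\}^{nk}$ also denote the vector with $h^{(j)}_{i\ell}=1$ iff $h^{(j)}(x_i)=\ell$; for $\ell\le k$ let $\vec e^{\,n}_\ell\in\{0,1\}^{nk}$ have entries $(\vec e^{\,n}_\ell)_{i\ell'}=\mathbf 1(\ell'=\ell)$. The matrix $A\in\mathbb{R}^{m\times nk}$ has rows $a^{(j)}=h^{(j)}/n_j$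 for $1\le j\le p$ and $a^{(p+\ell)}=\vec e^{\,n}_\ell/n$ for $1\le\ell\le k$. For $\theta\in\mathbb{R}^m$ put $a^{(\theta)}=A^\top\theta\in\mathbb{R}^{nk}$ (entries $a^{(\theta)}_{i\ell}$) and define $g^{(\theta)}\in\Delta_k^n$ by $g^{(\theta)}_{i\ell}=\exp(a^{(\theta)}_{i\ell})/\sum_{\ell'=1}^k\exp(a^{(\theta)}_{i\ell'})$; let $\mathcal G=\{g^{(\theta)}:\theta\in\mathbb{R}^m\}$. A fixed ''true labeling'' $\eta\in\Delta_k^n$ is given and $b^*:=A\eta\in\mathbb{R}^m$. Given $b\in\mathbb{R}^m$ and $\epsilon\in\mathbb{R}^m$ with $\epsilon\ge0$ and $b-\epsilon\le b^*\le b+\epsilon$ (entrywise), let $P=\{z\in\Delta_k^n:\ b-\epsilon\le Az\le b+\epsilon\}$ (entrywise). The maximum-entropy element of $P$ is the unique minimizer of $\sum_{i,\ell}z_{i\ell}\log z_{i\ell}$ over $P$ (with $0\log0=0$). For $\mu,\nu\in\Delta_k^n$, $d(\mu,\nu)=\sum_{i=1}^n\mathrm{KL}(\mu_i\|\nu_i)=\sum_{i,\ell}\mu_{i\ell}\log(\mu_{i\ell}/\nu_{i\ell})$, with $0\log(0/x)=0$. $|\theta|$ is the entrywise absolute value. *)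

(* Defs.v *)
From HB Require Import structures.
From mathcomp Require Import all_boot all_order all_algebra.
From mathcomp Require Import reals.
From mathcomp.analysis Require Import sequences exp.
Set Implicit Arguments. Unset Strict Implicit. Unset Printing Implicit Defensive.
Import Order.TTheory GRing.Theory Num.Theory.
Local Open Scope ring_scope.

Section Defs.
Variable R : realType.
Variables n k p : nat.

(* An element of R^{nk}, indexed by data point i and class l. *)
Definition vec := 'I_n -> 'I_k -> R.

Definition in_simplex (z : vec) : Prop :=
  (forall i l, 0 <= z i l) /\ (forall i, \sum_(l < k) z i l = 1).

(* rules: h j i = Some l  (label l)  or None  (abstain "?") *)
Variable h : 'I_p -> 'I_n -> option 'I_k.

Definition nrule (j : 'I_p) : nat := #|[set i : 'I_n | h j i != None]|.

(* entry (i,l) of row r of A, with rows indexed by 'I_(p + k) (m = p + k) *)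
Definition Aent (r : 'I_(p + k)) (i : 'I_n) (l : 'I_k) : R :=
  match split r with
  | inl j => if h j i == Some l then (nrule j)%:R^-1 else 0
  | inr l' => if l == l' then (n%:R)^-1 else 0
  end.

Definition Amul (z : vec) (r : 'I_(p + k)) : R :=
  \sum_(i < n) \sum_(l < k) Aent r i l * z i l.

Definition atheta (theta : 'I_(p + k) -> R) (i : 'I_n) (l : 'I_k) : R :=
  \sum_(r < p + k) theta r * Aent r i l.

Definition gtheta (theta : 'I_(p + k) -> R) (i : 'I_n) (l : 'I_k) : R :=
  expR (atheta theta i l) / \sum_(l' < k) expR (atheta theta i l').

Definition inP (b eps : 'I_(p + k) -> R) (z : vec) : Prop :=
  in_simplex z /\ (forall r, b r - eps r <= Amul z r <= b r + eps r).

Definition negent (z : vec) : R :=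
  \sum_(i < n) \sum_(l < k) (if z i l == 0 then 0 else z i l * ln (z i l)).

(* maximum-entropy element of P: an element of P minimizing negent over P
   (it is unique by strict convexity) *)
Definition is_maxent (b eps : 'I_(p + k) -> R) (z : vec) : Prop :=
  inP b eps z /\ (forall y, inP b eps y -> negent z <= negent y).

Definition dKL (mu nu : vec) : R :=
  \sum_(i < n) \sum_(l < k)
     (if mu i l == 0 then 0 else mu i l * ln (mu i l / nu i l)).

End Defs.

(* Main.v *)
Require Import Defs.
From HB Require Import structures.
From mathcomp Require Import all_boot all_order all_algebra.
From mathcomp Require Import reals.
From mathcomp.analysis Require Import sequences exp.
From mathcomp Require Import ring lra.
Import Order.TTheory GRing.Theory Num.Theory.
Local Open Scope ring_scope.

Lemma ln_le_sub1 {R : realType} (x : R) : 0 < x -> ln x <= x - 1.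
Proof.
move=> x0; have := @le_ln1Dx R (x - 1).
rewrite addrCA subrr addr0; apply; lra.
Qed.

Lemma expR_le2 {R : realType} (x : R) : `|x| <= 1/2 -> expR x <= 1 + x + 2 * x ^+ 2.
Proof.
move=> hx; have /andP[h1 h2] : -(1/2) <= x <= 1/2 by rewrite -ler_norml.
have e1 := expR_ge1Dx (- x).
rewrite expRN in e1.
have ex := expR_gt0 x.
have hpos : 0 < 1 - x by lra.
have : expR x * (1 - x) <= 1.
  by rewrite -[X in _ <= X](mulfV (lt0r_neq0 ex)) ler_pM2l.
move=> H.
have : (1 + x + 2 * x ^+ 2) * (1 - x) >= 1.
  have -> : (1 + x + 2 * x ^+ 2) * (1 - x) = 1 + x^+2 * (1 - 2 * x) by ring.
  rewrite lerDl; apply: mulr_ge0; [exact: sqr_ge0| lra].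
move=> H2; nra.
Qed.

Lemma ln_divE {R : realType} (x y : R) : 0 < x -> 0 < y -> ln (x / y) = ln x - ln y.
Proof. by move=> x0 y0; rewrite ln_div // posrE. Qed.

Lemma xlnx_tangent {R : realType} (x y : R) : 0 < x -> 0 <= y ->
  x * ln x + (ln x + 1) * (y - x) <= y * ln y.
Proof.
move=> x0 y0; case: (eqVneq y 0) => [->|yn0].
  rewrite mul0r.
  have -> : x * ln x + (ln x + 1) * (0 - x) = - x by ring.
  lra.
have yp : 0 < y by rewrite lt0r yn0.
have := @ln_le_sub1 R _ (divr_gt0 x0 yp); rewrite ln_divE //.
move=> H.
have H2 : y * (ln x - ln y) <= y * (x / y - 1) by rewrite ler_pM2l.
have : y * (x / y - 1) = x - y by rewrite mulrBr mulrCA mulfV ?lt0r_neq0 // mulr1 mulr1.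
nra.
Qed.

Lemma ln_diff_le {R : realType} (x y : R) : 0 < x -> 0 < y -> x * (ln y - ln x) <= y - x.
Proof.
move=> x0 y0; have := @ln_le_sub1 R _ (divr_gt0 y0 x0); rewrite ln_divE // => H.
have H2 : x * (ln y - ln x) <= x * (y / x - 1) by rewrite ler_pM2l.
suff <- : x * (y / x - 1) = y - x by [].
by rewrite mulrBr mulrCA mulfV ?lt0r_neq0 // mulr1 mulr1.
Qed.

Lemma entry_bound {R : realType} (g e t : R) : 0 < g -> 0 <= e -> 0 < t -> t <= 1/2 ->
  (e - g) * ln ((1 - t) * g + t * e) <= (e - g) * ln g + t * (3 * (e - g) ^+ 2 / g).
Proof.
move=> g0 e0 t0 t1.
set z := (1 - t) * g + t * e.
have zg : g / 2 <= z by rewrite /z; nra.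
have z0 : 0 < z by lra.
have A1 := @ln_diff_le R _ _ g0 z0.
have A2 := @ln_diff_le R _ _ z0 g0.
set X := ln z - ln g.
have A2' : z - g <= z * X by rewrite /X; lra.
have zd : z - g = t * (e - g) by rewrite /z; ring.
rewrite -/X in A1.
suff : g * ((e - g) * X) <= g * (t * (3 * (e - g) ^+ 2 / g)).
  rewrite ler_pM2l // => H.
  have -> : (e - g) * ln z = (e - g) * ln g + (e - g) * X by rewrite /X; ring.
  lra.
have -> : g * (t * (3 * (e - g) ^+ 2 / g)) = 3 * t * (e - g) ^+ 2.
  by field; rewrite lt0r_neq0.
have sq : 0 <= t * (e - g) ^+ 2 by apply: mulr_ge0; [lra| exact: sqr_ge0].
case: (lerP 0 (e - g)) => hd.
  have : (e - g) * (g * X) <= (e - g) * (t * (e - g)) by apply: ler_wpM2l; lra.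
  rewrite expr2 in sq *; nra.
case: (lerP ((e - g) * X) 0) => hx.
  have : 0 <= g by lra.
  nra.
have B : (e - g) * (z * X) <= (e - g) * (t * (e - g)).
  by apply: ler_wnM2l; lra.
rewrite expr2 in sq *; nra.
Qed.

Lemma le_sum_entry {R : realType} m (F : 'I_m -> R) j :
  (forall i, 0 <= F i) -> F j <= \sum_i F i.
Proof.
move=> F0; rewrite (bigD1 j) //= lerDl; apply: sumr_ge0 => i _; exact: F0.
Qed.

Lemma le_sum2_entry {R : realType} n k (F : 'I_n -> 'I_k -> R) i0 l0 :
  (forall i l, 0 <= F i l) -> F i0 l0 <= \sum_i \sum_l F i l.
Proof.
move=> F0.
have H1 : F i0 l0 <= \sum_l F i0 l by apply: le_sum_entry => l.
have H2 : \sum_l F i0 l <= \sum_i \sum_l F i l.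
  by apply: (@le_sum_entry R n (fun i => \sum_l F i l)) => i; apply: sumr_ge0 => l _.
exact: le_trans H1 H2.
Qed.

Lemma sum_atheta {R : realType} {n k p : nat} (h : 'I_p -> 'I_n -> option 'I_k)
  (z : 'I_n -> 'I_k -> R) (theta : 'I_(p + k) -> R) :
  \sum_(i < n) \sum_(l < k) z i l * atheta h theta i l
  = \sum_(r < p + k) theta r * Amul h z r.
Proof.
rewrite /atheta /Amul.
under eq_bigr => i _ do under eq_bigr => l _ do rewrite mulr_sumr.
under [RHS]eq_bigr => r _ do rewrite mulr_sumr.
under [RHS]eq_bigr => r _ do under eq_bigr => i _ do rewrite mulr_sumr.
under eq_bigr => i _ do rewrite exchange_big.
rewrite exchange_big /=; apply: eq_bigr => r _.
apply: eq_bigr => i _; apply: eq_bigr => l _; ring.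
Qed.

Lemma atheta_lin {R : realType} {n k p : nat} (h : 'I_p -> 'I_n -> option 'I_k) (t1 t2 : 'I_(p + k) -> R) (s : R) i l :
  atheta h (fun r => t1 r + s * t2 r) i l = atheta h t1 i l + s * atheta h t2 i l.
Proof.
rewrite /atheta mulr_sumr -big_split /=; apply: eq_bigr => r _; ring.
Qed.

Definition Zf {R : realType} {n k p : nat} (h : 'I_p -> 'I_n -> option 'I_k) (theta : 'I_(p + k) -> R) (i : 'I_n) : R :=
  \sum_(l < k) expR (atheta h theta i l).

Lemma Zf_gt0 {R : realType} {n k p : nat} (h : 'I_p -> 'I_n -> option 'I_k) (theta : 'I_(p + k) -> R) i :
  (0 < k)%N -> 0 < Zf h theta i.
Proof.
move=> k0; have := @le_sum_entry R k (fun l => expR (atheta h theta i l)) (Ordinal k0).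
move=> H; apply: lt_le_trans (H _); [exact: expR_gt0| move=> l; exact: expR_ge0].
Qed.

Lemma gtheta_gt0 {R : realType} {n k p : nat} (h : 'I_p -> 'I_n -> option 'I_k) (theta : 'I_(p + k) -> R) i l :
  0 < gtheta h theta i l :> R.
Proof.
rewrite /gtheta; apply: divr_gt0; first exact: expR_gt0.
have k0 : (0 < k)%N := leq_ltn_trans (leq0n _) (ltn_ord l).
exact: (Zf_gt0 h theta i k0).
Qed.

Lemma gtheta_sum {R : realType} {n k p : nat} (h : 'I_p -> 'I_n -> option 'I_k) (theta : 'I_(p + k) -> R) i :
  (0 < k)%N -> \sum_l gtheta h theta i l = 1 :> R.
Proof.
move=> k0; rewrite /gtheta -mulr_suml mulfV //; apply: lt0r_neq0.
exact: (Zf_gt0 h theta i k0).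
Qed.

Lemma ln_gtheta {R : realType} {n k p : nat} (h : 'I_p -> 'I_n -> option 'I_k) (theta : 'I_(p + k) -> R) i l :
  ln (gtheta h theta i l) = atheta h theta i l - ln (Zf h theta i) :> R.
Proof.
have k0 : (0 < k)%N := leq_ltn_trans (leq0n _) (ltn_ord l).
by rewrite /gtheta ln_divE ?expRK //; [exact: expR_gt0| exact: Zf_gt0].
Qed.

Lemma sum_lng {R : realType} {n k p : nat} (h : 'I_p -> 'I_n -> option 'I_k)
  (z : 'I_n -> 'I_k -> R) (theta : 'I_(p + k) -> R) :
  (forall i, \sum_l z i l = 1) ->
  \sum_(i < n) \sum_(l < k) z i l * ln (gtheta h theta i l)
  = \sum_(r < p + k) theta r * Amul h z r - \sum_i ln (Zf h theta i).
Proof.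
move=> zs; rewrite -sum_atheta -sumrB; apply: eq_bigr => i _.
under eq_bigr => l _ do rewrite ln_gtheta mulrBr.
by rewrite sumrB -mulr_suml zs mul1r.
Qed.

Lemma if_mul {R : realType} (x y : R) : (if x == 0 then 0 else x * y) = x * y.
Proof. by case: eqP => // ->; rewrite mul0r. Qed.

Lemma dKLE {R : realType} {n k : nat} (mu nu : 'I_n -> 'I_k -> R) :
  dKL mu nu = \sum_i \sum_l mu i l * ln (mu i l / nu i l).
Proof. by apply: eq_bigr => i _; apply: eq_bigr => l _; rewrite if_mul. Qed.

Lemma negentE {R : realType} {n k : nat} (z : 'I_n -> 'I_k -> R) :
  negent z = \sum_i \sum_l z i l * ln (z i l).
Proof. by apply: eq_bigr => i _; apply: eq_bigr => l _; rewrite if_mul. Qed.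

Lemma dKL_split {R : realType} {n k : nat} (mu nu : 'I_n -> 'I_k -> R) :
  (forall i l, 0 <= mu i l) -> (forall i l, 0 < mu i l -> 0 < nu i l) ->
  dKL mu nu = \sum_i \sum_l mu i l * ln (mu i l)
              - \sum_i \sum_l mu i l * ln (nu i l).
Proof.
move=> m0 mn; rewrite dKLE -sumrB; apply: eq_bigr => i _.
rewrite -sumrB; apply: eq_bigr => l _.
case: (eqVneq (mu i l) 0) => [->|mn0]; first by rewrite !mul0r subrr.
have mp : 0 < mu i l by rewrite lt0r mn0 m0.
by rewrite ln_divE // ?mn // mulrBr.
Qed.

Lemma Amul_conv {R : realType} {n k p : nat} (h : 'I_p -> 'I_n -> option 'I_k)
  (g e : 'I_n -> 'I_k -> R) t r :
  Amul h (fun i l => (1 - t) * g i l + t * e i l) r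
  = (1 - t) * Amul h g r + t * Amul h e r.
Proof.
rewrite /Amul !mulr_sumr -big_split /=; apply: eq_bigr => i _.
rewrite !mulr_sumr -big_split /=; apply: eq_bigr => l _; ring.
Qed.

Lemma le_sum2 {R : realType} {n k : nat} (F G : 'I_n -> 'I_k -> R) :
  (forall i l, F i l <= G i l) -> \sum_i \sum_l F i l <= \sum_i \sum_l G i l.
Proof. by move=> H; apply: ler_sum => i _; apply: ler_sum => l _. Qed.

Lemma sum2_le_entry {R : realType} {n k : nat} (F : 'I_n -> 'I_k -> R) i0 l0 :
  (forall i l, F i l <= 0) -> \sum_i \sum_l F i l <= F i0 l0.
Proof.
move=> H.
have H2 : - F i0 l0 <= \sum_i \sum_l - F i l.
  by apply: (@le_sum2_entry R n k (fun i l => - F i l)) => i l; rewrite oppr_ge0.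
move: H2; under eq_bigr => i _ do rewrite sumrN.
by rewrite sumrN lerN2.
Qed.

Lemma entry_le1 {R : realType} {n k : nat} (z : 'I_n -> 'I_k -> R) i l :
  in_simplex z -> z i l <= 1.
Proof.
case=> z0 zs; rewrite -(zs i); exact: (@le_sum_entry R k (z i) l).
Qed.

Lemma maxent_var {R : realType} {n k p : nat} (h : 'I_p -> 'I_n -> option 'I_k)
  (b eps : 'I_(p + k) -> R) (g e : 'I_n -> 'I_k -> R) :
  is_maxent h b eps g -> inP h b eps e ->
  (forall i l, 0 < e i l -> 0 < g i l) /\
  0 <= \sum_i \sum_l (e i l - g i l) * ln (g i l).
Proof.
case=> [[[g0 gs] gA] gmin] [[e0 es] eA].
pose zt t i l := (1 - t) * g i l + t * e i l.
have zP : forall t, 0 <= t <= 1 -> inP h b eps (zt t).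
  move=> t /andP[t0 t1]; split; [split|].
  - move=> i l; rewrite /zt; apply: addr_ge0; apply: mulr_ge0 => //; lra.
  - move=> i; rewrite /zt big_split /= -!mulr_sumr gs es; ring.
  - move=> r; rewrite /zt Amul_conv.
    have /andP[a1 a2] := gA r; have /andP[b1 b2] := eA r.
    apply/andP; split; nra.
have S1 : forall t, 0 < t -> t <= 1/2 ->
    0 <= \sum_i \sum_l (e i l - g i l) * ln (zt t i l).
  move=> t t0 t1.
  have := gmin _ (zP t ltac:(apply/andP; split; lra)).
  rewrite !negentE => H.
  have H2 : \sum_i \sum_l zt t i l * ln (zt t i l) - \sum_i \sum_l g i l * ln (g i l)
      <= \sum_i \sum_l t * ((ln (zt t i l) + 1) * (e i l - g i l)).
    rewrite -sumrB; apply: ler_sum => i _; rewrite -sumrB; apply: ler_sum => l _.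
    have z0 : 0 <= zt t i l by rewrite /zt; apply: addr_ge0; apply: mulr_ge0 => //; lra.
    case: (eqVneq (zt t i l) 0) => [zz|zn0].
      have gz : g i l = 0.
        move: zz; rewrite /zt => zz.
        have := g0 i l; have := e0 i l; nra.
      have ez : e i l = 0.
        move: zz; rewrite /zt => zz.
        have := g0 i l; have := e0 i l; nra.
      by rewrite zz gz ez !mul0r subrr mulr0 mulr0.
    have zp : 0 < zt t i l by rewrite lt0r zn0.
    have := @xlnx_tangent R _ _ zp (g0 i l).
    have -> : g i l - zt t i l = - (t * (e i l - g i l)) by rewrite /zt; ring.
    move=> T.
    have -> : t * ((ln (zt t i l) + 1) * (e i l - g i l))
        = (ln (zt t i l) + 1) * (t * (e i l - g i l)) by ring.
    lra.
  have H3 : \sum_i \sum_l t * ((ln (zt t i l) + 1) * (e i l - g i l))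
      = t * \sum_i \sum_l (e i l - g i l) * ln (zt t i l).
    rewrite mulr_sumr; apply: eq_bigr => i _.
    have -> : \sum_l t * ((ln (zt t i l) + 1) * (e i l - g i l))
      = t * \sum_l (e i l - g i l) * ln (zt t i l) + t * \sum_l (e i l - g i l).
      rewrite !mulr_sumr -big_split /=; apply: eq_bigr => l _; ring.
    by rewrite sumrB es gs subrr mulr0 addr0.
  rewrite H3 in H2.
  have : 0 <= t * \sum_i \sum_l (e i l - g i l) * ln (zt t i l) by lra.
  by rewrite pmulr_rge0.
pose C i l := if g i l == 0 then 0 else 3 * (e i l - g i l) ^+ 2 / g i l.
pose Ef t i l := if g i l == 0 then e i l * ln (t * e i l) else 0.
pose K := \sum_i \sum_l (e i l - g i l) * ln (g i l).
pose CC := \sum_i \sum_l C i l.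
have C0 : 0 <= CC.
  apply: sumr_ge0 => i _; apply: sumr_ge0 => l _; rewrite /C.
  case: eqP => // /eqP gn0; apply: divr_ge0; last exact: g0.
  by apply: mulr_ge0 => //; exact: sqr_ge0.
have Ef0 : forall t, 0 < t -> t <= 1/2 -> forall i l, Ef t i l <= 0.
  move=> t t0 t1 i l; rewrite /Ef; case: eqP => // _.
  apply: mulr_ge0_le0; first exact: e0.
  apply: ln_le0; have := @entry_le1 R n k e i l (conj e0 es); have := e0 i l; nra.
have S3 : forall t, 0 < t -> t <= 1/2 ->
    0 <= K + t * CC + \sum_i \sum_l Ef t i l.
  move=> t t0 t1; apply: (le_trans (S1 t t0 t1)).
  rewrite /K /CC mulr_sumr -!big_split /=; apply: ler_sum => i _.
  rewrite mulr_sumr -!big_split /=; apply: ler_sum => l _.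
  rewrite /C /Ef /zt; case: eqP => [gz|/eqP gn0].
    by rewrite gz mulr0 add0r subr0 (ln0 (lexx 0)) !mulr0 !add0r.
  have gp : 0 < g i l by rewrite lt0r gn0 g0.
  have := @entry_bound R (g i l) (e i l) t gp (e0 i l) t0 t1.
  by rewrite addr0.
have Kp : 0 <= K.
  rewrite leNgt; apply/negP => Kn.
  pose t := Num.min (1/2) (- K / (2 * CC + 1)).
  have den : 0 < 2 * CC + 1 by lra.
  have tp : 0 < t by rewrite lt_min; apply/andP; split; [lra| apply: divr_gt0; lra].
  have t1 : t <= 1/2 by rewrite ge_min lexx.
  have t2 : t * (2 * CC + 1) <= - K.
    rewrite -ler_pdivlMr //; by rewrite ge_min lexx orbT.
  have := S3 t tp t1.
  have : \sum_i \sum_l Ef t i l <= 0.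
    apply: sumr_le0 => i _; apply: sumr_le0 => l _; exact: Ef0.
  nra.
split=> //.
move=> i0 l0 ep; rewrite lt0r g0 andbT; apply/negP => /eqP gz.
pose M := `|K| + CC + 1.
pose e1 := e i0 l0.
pose t := Num.min (1/2) (expR (- (M / e1)) / e1).
have tp : 0 < t by rewrite lt_min; apply/andP; split; [lra| apply: divr_gt0 => //; exact: expR_gt0].
have t1 : t <= 1/2 by rewrite ge_min lexx.
have t2 : t * e1 <= expR (- (M / e1)).
  rewrite -ler_pdivlMr //; by rewrite ge_min lexx orbT.
have te : 0 < t * e1 by apply: mulr_gt0.
have L : ln (t * e1) <= - (M / e1).
  by rewrite -(expRK (- (M / e1))) ler_ln // posrE expR_gt0.
have L2 : e1 * ln (t * e1) <= - M.
  have : e1 * ln (t * e1) <= e1 * - (M / e1) by rewrite ler_pM2l.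
  suff -> : e1 * - (M / e1) = - M by [].
  by field; rewrite lt0r_neq0.
have E1 : \sum_i \sum_l Ef t i l <= Ef t i0 l0.
  by apply: sum2_le_entry => i l; exact: Ef0.
have E2 : Ef t i0 l0 = e1 * ln (t * e1) by rewrite /Ef gz eqxx.
have := S3 t tp t1.
have KK : K <= `|K| := ler_norm K.
have tC : t * CC <= CC / 2 by nra.
rewrite /M in L2; lra.
Qed.

Lemma dKL_gtheta {R : realType} {n k p : nat} (h : 'I_p -> 'I_n -> option 'I_k)
  (z : 'I_n -> 'I_k -> R) (theta : 'I_(p + k) -> R) :
  in_simplex z ->
  dKL z (gtheta h theta) = \sum_i \sum_l z i l * ln (z i l)
     - (\sum_(r < p + k) theta r * Amul h z r - \sum_i ln (Zf h theta i)).
Proof.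
case=> z0 zs; rewrite dKL_split // ?sum_lng // => i l _; exact: gtheta_gt0.
Qed.

Lemma foc_le {R : realType} {n k p : nat} (h : 'I_p -> 'I_n -> option 'I_k)
  (e : 'I_n -> 'I_k -> R) (ts : 'I_(p + k) -> R) :
  (0 < k)%N -> in_simplex e ->
  (forall theta, dKL e (gtheta h ts) <= dKL e (gtheta h theta)) ->
  forall v, \sum_r v r * (Amul h e r - Amul h (gtheta h ts) r) <= 0.
Proof.
move=> k0 eS hmin v.
pose G := gtheta h ts.
pose w := atheta h v.
pose D := \sum_r v r * (Amul h e r - Amul h G r).
pose W := \sum_i \sum_l G i l * w i l ^+ 2.
pose B := \sum_i \sum_l `|w i l| + 1.
have W0 : 0 <= W.
  apply: sumr_ge0 => i _; apply: sumr_ge0 => l _; apply: mulr_ge0; last exact: sqr_ge0.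
  exact: ltW (gtheta_gt0 _ _ _ _).
have B1 : forall i l, `|w i l| <= B - 1.
  move=> i l; rewrite /B addrK.
  exact: (@le_sum2_entry R n k (fun i l => `|w i l|)).
have Bp : 1 <= B.
  by rewrite /B lerDr; apply: sumr_ge0 => i _; apply: sumr_ge0 => l _.
have key : forall s, 0 < s -> s * (2 * B) <= 1 -> s * D <= 2 * s ^+ 2 * W.
  move=> s s0 sB.
  pose ths := fun r => ts r + s * v r.
  have H := hmin ths.
  rewrite !dKL_gtheta // in H.
  have H1 : \sum_r ths r * Amul h e r - \sum_r ts r * Amul h e r
            = s * \sum_r v r * Amul h e r.
    rewrite -sumrB mulr_sumr; apply: eq_bigr => r _; rewrite /ths; ring.
  have H2 : forall i, ln (Zf h ths i) - ln (Zf h ts i)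
      <= \sum_l G i l * (s * w i l + 2 * s ^+ 2 * w i l ^+ 2).
    move=> i.
    have Zp := Zf_gt0 h ts i k0.
    have Zsp := Zf_gt0 h ths i k0.
    rewrite -ln_divE //.
    apply: (le_trans (@ln_le_sub1 R _ (divr_gt0 Zsp Zp))).
    have -> : Zf h ths i / Zf h ts i = \sum_l G i l * expR (s * w i l).
      rewrite /Zf mulr_suml; apply: eq_bigr => l _.
      rewrite /ths atheta_lin expRD /G /gtheta /Zf; ring.
    rewrite -{1}(gtheta_sum h ts i k0) -/G -sumrB; apply: ler_sum => l _.
    have Gp : 0 < G i l by exact: gtheta_gt0.
    have : expR (s * w i l) <= 1 + s * w i l + 2 * (s * w i l) ^+ 2.
      apply: expR_le2; rewrite normrM gtr0_norm //.
      have := B1 i l; have := normr_ge0 (w i l); nra.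
    move=> Ex.
    have -> : G i l * expR (s * w i l) - G i l = G i l * (expR (s * w i l) - 1) by ring.
    rewrite ler_pM2l //; move: Ex; rewrite exprMn; lra.
  have H3 : \sum_i (ln (Zf h ths i) - ln (Zf h ts i))
      <= s * \sum_r v r * Amul h G r + 2 * s ^+ 2 * W.
    apply: (le_trans (ler_sum _ (fun i _ => H2 i))).
    rewrite -sum_atheta !mulr_sumr -big_split /=; apply: ler_sum => i _.
    rewrite !mulr_sumr -big_split /=; apply: ler_sum => l _.
    rewrite /w le_eqVlt; apply/orP; left; apply/eqP; ring.
  have H4 : D = \sum_r v r * Amul h e r - \sum_r v r * Amul h G r.
    by rewrite /D -sumrB; apply: eq_bigr => r _; ring.
  rewrite sumrB in H3.
  rewrite H4 mulrBr; lra.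
have : D <= 0; last by [].
rewrite leNgt; apply/negP => Dp.
pose s := Num.min (1 / (2 * B)) (D / (4 * W + 1)).
have sp : 0 < s by rewrite lt_min; apply/andP; split; apply: divr_gt0; lra.
have s1 : s * (2 * B) <= 1 by rewrite -ler_pdivlMr ?ge_min ?lexx //; lra.
have s2 : s * (4 * W + 1) <= D by rewrite -ler_pdivlMr ?ge_min ?lexx ?orbT //; lra.
have := key s sp s1.
have : 0 <= s * W by apply: mulr_ge0; lra.
nra.
Qed.

Lemma gibbs {R : realType} {n k : nat} (g G : 'I_n -> 'I_k -> R) :
  in_simplex g -> (forall i l, 0 < G i l) -> (forall i, \sum_l G i l = 1) ->
  \sum_i \sum_l g i l * ln (G i l) <= \sum_i \sum_l g i l * ln (g i l).
Proof.
case=> g0 gs Gp Gs.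
suff : \sum_i \sum_l g i l * (ln (G i l) - ln (g i l)) <= 0.
  under eq_bigr => i _ do under eq_bigr => l _ do rewrite mulrBr.
  under eq_bigr => i _ do rewrite sumrB.
  rewrite sumrB; lra.
have Z : \sum_i \sum_l (G i l - g i l) = 0 :> R.
  by rewrite big1 // => i _; rewrite sumrB Gs gs subrr.
apply: (@le_trans _ _ (\sum_i \sum_l (G i l - g i l))); last by rewrite Z.
apply: ler_sum => i _; apply: ler_sum => l _.
case: (eqVneq (g i l) 0) => [->|gn0].
  by rewrite mul0r subr0; apply: ltW.
have gp : 0 < g i l by rewrite lt0r gn0 g0.
exact: ln_diff_le.
Qed.

Lemma foc {R : realType} {n k p : nat} (h : 'I_p -> 'I_n -> option 'I_k)
  (e : 'I_n -> 'I_k -> R) (ts : 'I_(p + k) -> R) :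
  (0 < k)%N -> in_simplex e ->
  (forall theta, dKL e (gtheta h ts) <= dKL e (gtheta h theta)) ->
  forall v, \sum_r v r * (Amul h e r - Amul h (gtheta h ts) r) = 0.
Proof.
move=> k0 eS hmin v; apply/eqP; rewrite eq_le foc_le //=.
have H := foc_le h e ts k0 eS hmin (fun r => - v r).
rewrite /= in H; move: H.
under eq_bigr => r _ do rewrite mulNr.
by rewrite sumrN oppr_le0.
Qed.

Lemma bound_lin {R : realType} m (th eps x y c : 'I_m -> R) :
  (forall r, c r - eps r <= x r <= c r + eps r) ->
  (forall r, c r - eps r <= y r <= c r + eps r) ->
  \sum_r th r * x r - \sum_r th r * y r <= 2 * \sum_r eps r * `|th r|.
Proof.
move=> hx hy; rewrite -sumrB mulr_sumr; apply: ler_sum => r _.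
have /andP[x1 x2] := hx r; have /andP[y1 y2] := hy r.
have : `|x r - y r| <= 2 * eps r by rewrite ler_norml; apply/andP; split; lra.
move=> N.
rewrite -mulrBr; apply: (le_trans (ler_norm _)); rewrite normrM.
have : `|th r| * `|x r - y r| <= `|th r| * (2 * eps r) by apply: ler_wpM2l.
move=> H; apply: (le_trans H); rewrite le_eqVlt; apply/orP; left; apply/eqP; ring.
Qed.

Theorem theorem4 (R : realType) (n k p : nat)
  (h : 'I_p -> 'I_n -> option 'I_k)
  (eta : 'I_n -> 'I_k -> R) (b eps : 'I_(p + k) -> R)
  (thetastar : 'I_(p + k) -> R) (gbf : 'I_n -> 'I_k -> R) :
  (1 <= n)%N -> (2 <= k)%N -> (1 <= p)%N ->
  (forall j : 'I_p, (1 <= nrule h j)%N) ->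
  in_simplex eta ->
  (forall r, 0 <= eps r) ->
  (forall r, b r - eps r <= Amul h eta r <= b r + eps r) ->
  (forall theta, dKL eta (gtheta h thetastar) <= dKL eta (gtheta h theta)) ->
  is_maxent h b eps gbf ->
  let bound := 2 * \sum_(r < p + k) eps r * `|thetastar r| in
  (dKL eta gbf - dKL eta (gtheta h thetastar) <= bound /\
   bound <= 2 * (\big[Num.max/0]_(r < p + k) eps r)
               * \sum_(r < p + k) `|thetastar r|) /\
  ((exists theta, forall i l, gbf i l = gtheta h theta i l) ->
     dKL eta gbf - dKL eta (gtheta h thetastar) = dKL (gtheta h thetastar) gbf
     /\ dKL (gtheta h thetastar) gbf <= bound).
Proof.
move=> n1 k2 p1 nr eS eps0 eA hmin gmax bound.
have k0 : (0 < k)%N by apply: leq_trans k2.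
have eP : inP h b eps eta := conj eS eA.
have [gpos gvar] := maxent_var h b eps gbf eta gmax eP.
case: (gmax) => [[[g0 gs] gA] _].
have [e0 es] := eS.
pose G := gtheta h thetastar.
have Gp : forall i l, 0 < G i l by move=> i l; exact: gtheta_gt0.
have Gs : forall i, \sum_l G i l = 1 by move=> i; exact: (gtheta_sum h thetastar i k0).
have P1 : dKL eta gbf - dKL eta G <= bound.
  rewrite (dKL_split eta gbf e0 gpos) (dKL_split eta G e0 (fun i l _ => Gp i l)).
  have X1 := sum_lng h eta thetastar es.
  have X2 := sum_lng h gbf thetastar gs.
  have Gi := gibbs gbf G (conj g0 gs) Gp Gs.
  have V : \sum_i \sum_l (eta i l - gbf i l) * ln (gbf i l)
      = \sum_i \sum_l eta i l * ln (gbf i l) - \sum_i \sum_l gbf i l * ln (gbf i l).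
    rewrite -sumrB; apply: eq_bigr => i _; rewrite -sumrB; apply: eq_bigr => l _; ring.
  have Bd := bound_lin (p + k) thetastar eps (Amul h eta) (Amul h gbf) b eA gA.
  rewrite -/G in X1 X2; rewrite /bound; lra.
split.
  split => //.
  rewrite /bound -mulrA ler_pM2l ?ltr0n // mulr_sumr; apply: ler_sum => r _.
  rewrite ler_wpM2r //; exact: (le_bigmax (0 : R) eps r).
case=> th hth.
have gq : forall z, dKL z gbf = dKL z (gtheta h th).
  by move=> z; apply: eq_bigr => i _; apply: eq_bigr => l _; rewrite hth.
have GS : in_simplex G by split => // i l; exact: ltW.
have EQ : dKL eta gbf - dKL eta G = dKL G gbf.
  rewrite !gq !dKL_gtheta //.
  have X := sum_lng h G thetastar Gs.
  have F := foc h eta thetastar k0 eS hmin (fun r => thetastar r - th r).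
  have F2 : \sum_r (thetastar r - th r) * (Amul h eta r - Amul h G r)
      = \sum_r thetastar r * Amul h eta r - \sum_r th r * Amul h eta r
        - (\sum_r thetastar r * Amul h G r - \sum_r th r * Amul h G r).
    by rewrite -!sumrB; apply: eq_bigr => r _; ring.
  rewrite /= -/G F2 in F.
  rewrite X; lra.
split=> //; rewrite -EQ; exact: P1.
Qed.
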